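(* The map taking a model to its data is injective on the set of all generic models (of all layer numbers $M\ge1$): if $(\tau,R)$ is a generic $M$-layer model and $(\tau',R')$ is a generic $M'$-layer model with the same data $(\sigma,\alpha)$, then $M=M'$, $\tau=\tau'$ and $R=R'$.
   Context: An $M$-layer model ($M\ge1$) is $(\tau,R)$ with $\tau\in\mathbb{R}^{M+1}_{>0}$, $R\in(-1,1)^{M+1}$. $\mathfrak{L}_M\subset\mathbb{Z}^{M+1}_{\geq0}$: all $k$ with $k_0=1$ and $k_n>0\Rightarrow k_{n-1}>0$ ($1\le n\le M$); $\mathfrak{L}^\tau_M=\{k\in\mathfrak{L}_M:\langle k,\tau\rangle\le\langle\mathbb{1},\tau\rangle\}$. Amplitude polynomial: $\mathbb{1}=(1,\ldots,1)$; inequalities and $\min$ entrywise; $x^k=\prod_n x_n^{k_n}$, $\binom{k}{b}=\prod_n\binom{k_n}{b_n}$; $\tilde k=(k_1,\ldots,k_M,0)$, $u=\min\{\mathbb{1},\tilde k\}$, $V(k)=\{b:u\le b\le\min\{k,\tilde k\}\}$, $a(x,k)=\sum_{b\in V(k)}\binom{k}{b}\binom{\tilde k-u}{b-u}(-x)^{\tilde k-b}x^{k-b}\prod_n(1-x_n^2)^{b_n}$. The data $(\sigma,\alpha)$ of $(\tau,R)$ is read off from the normal form $\sum_{n=1}^d\alpha_n\delta(t-\sigma_n)$ ($\alpha_n\neq0$, $\sigma_1<\cdots<\sigma_d$) of $D^{(\tau,R)}(t)=\sum_{k\in\mathfrak{L}^\tau_M}a(R,k)\delta(t-\langle k,\tau\rangle)$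 (the impulse response truncated to $[0,|\tau|]$). Enumeration function $\Psi(\tau,R):\mathfrak{L}^\tau_M\to\{0,\ldots,d\}$: $k\mapsto0$ if $\langle k,\tau\rangle\notin\{\sigma_n\}$, else $k\mapsto1+\#\{n:\sigma_n<\langle k,\tau\rangle\}$. A model is generic if its enumeration function is injective and never $0$. *)

(* Defs.v *)
From HB Require Import structures.
From mathcomp Require Import all_boot all_order all_algebra.
Set Implicit Arguments. Unset Strict Implicit. Unset Printing Implicit Defensive.
Import Order.TTheory GRing.Theory Num.Theory.
Local Open Scope ring_scope.

Section Layers.
Variable F : archiRealFieldType.

Definition is_model (M : nat) (tau Rc : seq F) : Prop :=
  [/\ (1 <= M)%N, size tau = M.+1, size Rc = M.+1,
      forall n : 'I_M.+1, 0 < tau`_n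
    & forall n : 'I_M.+1, -1 < Rc`_n < 1].

Definition tnorm (M : nat) (tau : seq F) : F := \sum_(n < M.+1) tau`_n.

Definition dotk (M : nat) (k : 'I_M.+1 -> nat) (tau : seq F) : F :=
  \sum_(n < M.+1) (k n)%:R * tau`_n.

Definition inL (M : nat) (k : 'I_M.+1 -> nat) : bool :=
  (k ord0 == 1)%N &&
  [forall n : 'I_M.+1, (0 < n)%N ==> (0 < k n)%N ==> (0 < k (inord n.-1))%N].

Definition inLtau (M : nat) (tau : seq F) (k : 'I_M.+1 -> nat) : bool :=
  inL k && (dotk k tau <= tnorm M tau).

Definition ktil (M : nat) (k : 'I_M.+1 -> nat) : 'I_M.+1 -> nat :=
  fun n => if (n < M)%N then k (inord n.+1) else 0%N.

(* amplitude polynomial a(x,k); the summation index b ranges over V(k),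
   enumerated inside the finite box {0..max k}^{M+1} (V(k) lies in it,
   since b <= k). *)
Definition amp (M : nat) (x : seq F) (k : 'I_M.+1 -> nat) : F :=
  let kt := ktil k in
  let u := fun n => minn 1 (kt n) in
  let B := (\max_(n < M.+1) k n)%N in
  \sum_(b : {ffun 'I_M.+1 -> 'I_B.+1}
         | [forall n, (u n <= b n)%N && (b n <= minn (k n) (kt n))%N])
    \prod_(n < M.+1)
      ('C(k n, b n)%:R * 'C(kt n - u n, b n - u n)%:R
       * (- x`_n) ^+ (kt n - b n) * x`_n ^+ (k n - b n)
       * (1 - x`_n ^+ 2) ^+ b n).

(* A bound N with every k in L_M^tau satisfying k_n < N for all n
   (k_n tau_n <= <k,tau> <= <1,tau>, so k_n <= <1,tau>/tau_n). Used only
   to enumerate the finite set L_M^tau. *)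
Definition kbound (M : nat) (tau : seq F) : nat :=
  (\sum_(n < M.+1) Num.bound (tnorm M tau / tau`_n))%N.

(* coefficient of delta(t - s) in D^{(tau,R)}:
   sum of a(R,k) over k in L_M^tau with <k,tau> = s *)
Definition coefD (M : nat) (tau Rc : seq F) (s : F) : F :=
  \sum_(k : {ffun 'I_M.+1 -> 'I_(kbound M tau)}
         | inLtau tau (fun n => nat_of_ord (k n)) &&
           (dotk (fun n => nat_of_ord (k n)) tau == s))
    amp Rc (fun n => nat_of_ord (k n)).

Definition times (M : nat) (tau : seq F) : seq F :=
  [seq dotk (fun n => nat_of_ord (k n)) tau
    | k : {ffun 'I_M.+1 -> 'I_(kbound M tau)}
      <- [seq k : {ffun 'I_M.+1 -> 'I_(kbound M tau)}
            <- enum {ffun 'I_M.+1 -> 'I_(kbound M tau)}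
            | inLtau tau (fun n => nat_of_ord (k n))]].

(* normal form sum_{n=1}^d alpha_n delta(t - sigma_n):
   sigma = increasing list of the distinct times with nonzero total
   amplitude, alpha = the corresponding amplitudes. *)
Definition sigma (M : nat) (tau Rc : seq F) : seq F :=
  sort <=%R (undup [seq s <- times M tau | coefD M tau Rc s != 0]).

Definition alpha (M : nat) (tau Rc : seq F) : seq F :=
  [seq coefD M tau Rc s | s <- sigma M tau Rc].

Definition data (M : nat) (tau Rc : seq F) : seq F * seq F :=
  (sigma M tau Rc, alpha M tau Rc).

Definition Psi (M : nat) (tau Rc : seq F) (k : 'I_M.+1 -> nat) : nat :=
  let t := dotk k tau in
  let sg := sigma M tau Rc in
  if t \in sg then (count (fun s => s < t) sg).+1 else 0%N.

Definition generic (M : nat) (tau Rc : seq F) : Prop :=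
  (forall k k' : 'I_M.+1 -> nat, inLtau tau k -> inLtau tau k' ->
     Psi tau Rc k = Psi tau Rc k' -> k =1 k')
  /\ (forall k : 'I_M.+1 -> nat, inLtau tau k -> Psi tau Rc k <> 0%N).

End Layers.

(* Main.v *)
Require Import Defs.
From HB Require Import structures.
From mathcomp Require Import all_boot all_order all_algebra.
From Stdlib Require Import FunctionalExtensionality.
Import Order.TTheory GRing.Theory Num.Theory.
Set Implicit Arguments. Unset Strict Implicit. Unset Printing Implicit Defensive.
Local Open Scope ring_scope.

Section Aux.
Variable F : archiRealFieldType.
Implicit Types tau Rc : seq F.

Lemma inL_down (M : nat) (k : 'I_M.+1 -> nat) : inL k ->
  forall d (i : 'I_M.+1), (0 < k i)%N -> (d <= i)%N -> (0 < k (inord (i - d)))%N.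
Proof.
case/andP=> _ /forallP H.
elim=> [|d IH] i Hi Hd; first by rewrite subn0 inord_val.
have H1 := IH i Hi (ltnW Hd).
have := H (inord (i - d)); rewrite inordK; last by rewrite ltnS (leq_trans (leq_subr _ _)) // -ltnS.
rewrite subn_gt0 Hd /= => /implyP /(_ H1).
by rewrite subnS.
Qed.

Lemma inL_pos (M : nat) (k : 'I_M.+1 -> nat) (i j : 'I_M.+1) : inL k ->
  (0 < k i)%N -> (j <= i)%N -> (0 < k j)%N.
Proof.
move=> HL Hi Hji.
have := inL_down HL Hi (leq_subr j i).
by rewrite subKn // inord_val.
Qed.

Lemma inL_0 (M : nat) (k : 'I_M.+1 -> nat) : inL k -> k ord0 = 1%N.
Proof. by case/andP=> /eqP. Qed.

Lemma term_le_sum (M : nat) (G : 'I_M.+1 -> F) (j : 'I_M.+1) :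
  (forall i, 0 <= G i) -> G j <= \sum_(i < M.+1) G i.
Proof.
move=> H; rewrite (bigD1 j) //= lerDl; exact: sumr_ge0.
Qed.

Lemma kbound_lt M tau Rc (k : 'I_M.+1 -> nat) : is_model M tau Rc ->
  inLtau tau k -> forall j, (k j < kbound M tau)%N.
Proof.
case=> _ _ _ Htau _ /andP[_ Hle] j.
have tj := Htau j.
have H1 : (k j)%:R * tau`_j <= tnorm M tau.
  apply: le_trans Hle; rewrite /dotk; idtac. apply: (@term_le_sum M (fun i => (k i)%:R * tau`_i)).
  by move=> i; rewrite mulr_ge0 // ltW.
have H2 : (k j)%:R <= tnorm M tau / tau`_j by rewrite ler_pdivlMr.
have H0 : 0 <= tnorm M tau / tau`_j by apply: le_trans H2.
have H3 := archi_boundP H0.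
have : (k j < Num.bound (tnorm M tau / tau`_j))%N.
  by rewrite -(ltr_nat F); apply: le_lt_trans H3.
move=> /leq_trans; apply.
rewrite /kbound (bigD1 j) //=; exact: leq_addr.
Qed.


Definition ee (M n : nat) : 'I_M.+1 -> nat := fun j => nat_of_bool (j <= n)%N.
Arguments ee : clear implicits.
Definition Tn tau (n : nat) : F := \sum_(j < n.+1) tau`_j.
Definition pre (n : nat) (c : nat -> nat) : Prop :=
  c 0%N = 1%N /\ forall j, (0 < j < n)%N -> (0 < c j)%N -> (0 < c j.-1)%N.
Definition inA tau (n : nat) (t : F) : Prop :=
  exists c, pre n c /\ t = \sum_(j < n) (c j)%:R * tau`_j.

Lemma inL_ee M n : inL (ee M n).
Proof.
apply/andP; split; first by rewrite /ee.
apply/forallP=> j; apply/implyP=> j0; apply/implyP; rewrite /ee.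
rewrite inordK; last by rewrite (leq_ltn_trans (leq_pred _)).
by case: (leqP j n) => // Hj _; rewrite (leq_trans (leq_pred _)).
Qed.

Lemma dotk_ee M n tau : (n <= M)%N -> dotk (ee M n) tau = Tn tau n.
Proof.
move=> Hn; rewrite /Tn (big_ord_widen M.+1 (fun j => tau`_j)) // /dotk [RHS]big_mkcond /=.
by apply: eq_bigr=> i _; rewrite /ee ltnS; case: (i <= n)%N; rewrite ?mul1r ?mul0r.
Qed.

Lemma inLtau_ee M n tau Rc : is_model M tau Rc -> inLtau tau (ee M n).
Proof.
case=> _ _ _ Ht _; apply/andP; split; first exact: inL_ee.
apply: ler_sum=> i _; rewrite /ee; case: (i <= n)%N; rewrite ?mul1r ?mul0r //.
exact: ltW.
Qed.

Lemma dotk_ge M tau Rc (k : 'I_M.+1 -> nat) (n : 'I_M.+1) : is_model M tau Rc ->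
  inL k -> (0 < k n)%N -> Tn tau n <= dotk k tau.
Proof.
case=> _ _ _ Ht _ HL Hn; rewrite -(@dotk_ee M); last by rewrite -ltnS.
apply: ler_sum=> i _; apply: ler_wpM2r; first exact: ltW.
rewrite ler_nat /ee; case: (leqP i n) => // Hi.
exact: (inL_pos HL Hn Hi).
Qed.

Lemma sigma_times M tau Rc t : t \in sigma M tau Rc ->
  exists k : 'I_M.+1 -> nat, inLtau tau k /\ dotk k tau = t.
Proof.
rewrite /sigma mem_sort mem_undup mem_filter => /andP[_].
case/mapP=> k; rewrite mem_filter => /andP[Hk _] ->.
by exists (fun n => nat_of_ord (k n)).
Qed.

Lemma times_sigma M tau Rc (k : 'I_M.+1 -> nat) : generic M tau Rc ->
  inLtau tau k -> dotk k tau \in sigma M tau Rc.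
Proof.
case=> _ H Hk; have := H k Hk; rewrite /Psi.
by case: ifP.
Qed.

Lemma inA_of M tau (k : 'I_M.+1 -> nat) n : (n <= M.+1)%N -> inL k ->
  (forall j : 'I_M.+1, (n <= j)%N -> k j = 0%N) -> inA tau n (dotk k tau).
Proof.
move=> Hn HL Hz.
exists (fun j => k (inord j)); split.
  split.
    have -> : inord 0 = ord0 :> 'I_M.+1 by apply: val_inj; rewrite /= inordK.
    exact: inL_0.
  move=> j /andP[j0 jn] Hj.
  have jM : (j < M.+1)%N by apply: leq_trans jn _.
  have := HL; case/andP=> _ /forallP /(_ (inord j)).
  by rewrite inordK // j0 Hj.
rewrite (big_ord_widen M.+1 (fun j => (k (inord j))%:R * tau`_j)) //.
rewrite /dotk (bigID (fun i : 'I_M.+1 => (i < n)%N)) /= [X in _ + X]big1 ?addr0.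
  by apply: eq_bigr=> i _; rewrite inord_val.
by move=> i; rewrite -leqNgt => /Hz ->; rewrite mul0r.
Qed.

Lemma Tn_sigma M tau Rc n : is_model M tau Rc -> generic M tau Rc -> (n <= M)%N ->
  Tn tau n \in sigma M tau Rc.
Proof.
move=> Hm Hg Hn; rewrite -(@dotk_ee M) //; apply: times_sigma Hg _.
exact: inLtau_ee Hm.
Qed.

Lemma Tn_notA M tau Rc n : is_model M tau Rc -> generic M tau Rc -> (n <= M)%N ->
  ~ inA tau n (Tn tau n).
Proof.
move=> Hm Hg Hn [c [[c0 Hc] Hs]].
have Hm' := Hm; case: Hm' => _ _ _ Ht _.
case: n Hn Hs Hc => [|n] Hn Hs Hc.
  move: Hs; rewrite big_ord0 /Tn big_ord1 => H.
  by move: (Ht ord0); rewrite H ltxx.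
pose k := fun j : 'I_M.+1 => if (j < n.+1)%N then c j else 0%N.
have HL : inL k.
  apply/andP; split; first by rewrite /k /= c0.
  apply/forallP=> j; apply/implyP=> j0; apply/implyP; rewrite /k.
  case: ifP => // jn Hj.
  rewrite inordK; last by rewrite (leq_ltn_trans (leq_pred _)).
  rewrite (leq_ltn_trans (leq_pred _)) //.
  by apply: Hc => //; rewrite j0.
have Hd : dotk k tau = Tn tau n.+1.
  rewrite Hs (big_ord_widen M.+1 (fun j => (c j)%:R * tau`_j)); last by rewrite ltnS ltnW.
  rewrite /dotk [RHS]big_mkcond /=; apply: eq_bigr=> i _; rewrite /k.
  by case: ifP; rewrite ?mul0r.
have He := @dotk_ee M n.+1 tau Hn.
have Hk : inLtau tau k.
  apply/andP; split=> //; rewrite Hd -He.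
  by case/andP: (inLtau_ee n.+1 Hm).
have := (proj1 Hg) k (ee M n.+1) Hk (inLtau_ee n.+1 Hm).
rewrite /Psi Hd He => /(_ erefl) /(_ (inord n.+1)).
by rewrite /k /ee inordK // ltnn leqnn.
Qed.

Lemma below_A M tau Rc n t : is_model M tau Rc -> generic M tau Rc -> (n <= M)%N ->
  t \in sigma M tau Rc -> t < Tn tau n -> inA tau n t.
Proof.
move=> Hm Hg Hn /sigma_times [k [Hk <-]] Hlt.
have HL : inL k by case/andP: Hk.
have nM : (n < M.+1)%N by [].
case: (posnP (k (inord n))) => Hkn; last first.
  have := dotk_ge Hm HL Hkn; rewrite inordK // => H.
  by move: (lt_le_trans Hlt H); rewrite ltxx.
apply: inA_of => //; first exact: ltnW.
move=> j nj; apply/eqP; rewrite -leqn0 leqNgt; apply/negP=> Hj.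
have : (@inord M n <= j)%N by rewrite inordK.
by move/(inL_pos HL Hj); rewrite Hkn.
Qed.

Lemma all_A M tau Rc t : t \in sigma M tau Rc -> inA tau M.+1 t.
Proof.
move=> /sigma_times [k [Hk <-]].
apply: inA_of => //; first by case/andP: Hk.
by move=> j; rewrite leqNgt ltn_ord.
Qed.

Lemma coefD_k M tau Rc (k : 'I_M.+1 -> nat) : is_model M tau Rc -> generic M tau Rc ->
  inLtau tau k -> Defs.coefD M tau Rc (dotk k tau) = amp Rc k.
Proof.
move=> Hm Hg Hk.
pose kb : {ffun 'I_M.+1 -> 'I_(kbound M tau)} :=
  [ffun j => Ordinal (kbound_lt Hm Hk j)].
have Ekb : (fun n => nat_of_ord (kb n)) = k.
  by apply: functional_extensionality=> j; rewrite /kb ffunE.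
rewrite /Defs.coefD (bigD1 kb) /=; last by rewrite Ekb Hk eqxx.
rewrite Ekb big1 ?addr0 // => k' /andP[/andP[Hk' /eqP Hd] Hne].
have := (proj1 Hg) _ _ Hk' Hk; rewrite /Psi Hd => /(_ erefl) Heq.
case/eqP: Hne; apply/ffunP=> j; apply: val_inj.
by rewrite /kb ffunE /= Heq.
Qed.

Lemma ktil_ee M n : (n <= M)%N -> ktil (ee M n) = fun j => nat_of_bool (j < n)%N.
Proof.
move=> Hn; apply: functional_extensionality=> j; rewrite /ktil /ee.
case: ifP=> jM; first by rewrite inordK.
have : (j == M :> nat) by rewrite eqn_leq -ltnS ltn_ord leqNgt jM.
by move/eqP=> ->; rewrite ltnNge Hn.
Qed.

Lemma amp_ee M n (x : seq F) : (n <= M)%N ->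
  amp x (ee M n) = x`_n * \prod_(j < M.+1 | (j < n)%N) (1 - x`_j ^+ 2).
Proof.
move=> Hn; rewrite /amp ktil_ee //.
have HB : (1 <= \max_(j < M.+1) ee M n j)%N.
  by apply: (leq_trans _ (leq_bigmax ord0)); rewrite /ee.
have Hm1 : forall a : bool, minn 1 (nat_of_bool a) = a by case.
have Hm2 : forall j : 'I_M.+1, minn (ee M n j) (j < n)%N = (j < n)%N.
  by move=> j; rewrite /ee; case: (ltngtP j n).
have Hle : forall j : 'I_M.+1, (nat_of_bool (j < n)%N < (\max_(j < M.+1) ee M n j).+1)%N.
  by move=> j; rewrite ltnS (leq_trans _ HB) // leq_b1.
rewrite (bigD1 [ffun j : 'I_M.+1 => inord (nat_of_bool (j < n)%N)]) /=; last first.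
  by apply/forallP=> j; rewrite Hm1 Hm2 ffunE inordK // leqnn.
rewrite [X in _ + X]big1 ?addr0; last first.
  move=> b /andP[/forallP Hb /negP []]; apply/eqP/ffunP=> j; apply: val_inj.
  move: (Hb j); rewrite Hm1 Hm2 => Hj; rewrite ffunE /= inordK //.
  by apply/eqP; rewrite eqn_leq andbC.
rewrite (eq_bigr (fun j : 'I_M.+1 => (if (j < n)%N then 1 - x`_j ^+ 2 else 1) *
   (if j == n :> nat then x`_j else 1))); last first.
  move=> j _; rewrite ffunE inordK // /ee.
  by case: (ltngtP j n) => Hj /=;
    rewrite ?(minnn, minn0, subnn, subn0, bin0, binn, expr0, expr1, mul1r, mulr1).
rewrite big_split /= -big_mkcond mulrC; congr (_ * _).
rewrite (bigD1 (@inord M n)) /=; last by [].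
rewrite inordK ?eqxx // big1 ?mulr1 // => i Hi.
rewrite ifF //; apply: contraNF Hi => /eqP Hi; apply/eqP/val_inj.
by rewrite /= inordK.
Qed.

Lemma tau_from_T tau tau' n : (forall j, (j < n)%N -> Tn tau j = Tn tau' j) ->
  forall j, (j < n)%N -> tau`_j = tau'`_j.
Proof.
move=> H [|i] Hi; first by have := H 0%N Hi; rewrite /Tn !big_ord1.
have E : forall (t : seq F) k, Tn t k.+1 = Tn t k + t`_k.+1.
  by move=> t k; rewrite /Tn big_ord_recr.
by move: (H i.+1 Hi); rewrite !E H ?(ltnW Hi) // => /addrI.
Qed.

Lemma inA_eq tau tau' n t : (forall j, (j < n)%N -> tau`_j = tau'`_j) ->
  inA tau n t -> inA tau' n t.
Proof.
move=> H [c [Hc ->]]; exists c; split=> //.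
by apply: eq_bigr=> i _; rewrite H.
Qed.

Lemma T_notlt M M' tau Rc tau' Rc' n :
  is_model M tau Rc -> is_model M' tau' Rc' ->
  generic M tau Rc -> generic M' tau' Rc' ->
  sigma M tau Rc = sigma M' tau' Rc' -> (n <= M)%N -> (n <= M')%N ->
  (forall j, (j < n)%N -> tau`_j = tau'`_j) -> ~ (Tn tau' n < Tn tau n).
Proof.
move=> Hm Hm' Hg Hg' Hs Hn Hn' Heq Hlt.
have Hin : Tn tau' n \in sigma M tau Rc by rewrite Hs; exact: Tn_sigma.
have := below_A Hm Hg Hn Hin Hlt => /(inA_eq Heq).
exact: (Tn_notA Hm' Hg' Hn').
Qed.

Lemma all_T M M' tau Rc tau' Rc' :
  is_model M tau Rc -> is_model M' tau' Rc' ->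
  generic M tau Rc -> generic M' tau' Rc' ->
  sigma M tau Rc = sigma M' tau' Rc' ->
  forall n, (n <= M)%N -> (n <= M')%N -> Tn tau n = Tn tau' n.
Proof.
move=> Hm Hm' Hg Hg' Hs; elim/ltn_ind=> n IH Hn Hn'.
have Heq : forall j, (j < n)%N -> tau`_j = tau'`_j.
  apply: tau_from_T=> j Hj; apply: IH=> //.
    exact: leq_trans (ltnW Hj) Hn.
  exact: leq_trans (ltnW Hj) Hn'.
case: (ltgtP (Tn tau n) (Tn tau' n)) => // H.
  have Heq' : forall j, (j < n)%N -> tau'`_j = tau`_j by move=> j /Heq ->.
  by case: (T_notlt Hm' Hm Hg' Hg (esym Hs) Hn' Hn Heq' H).
by case: (T_notlt Hm Hm' Hg Hg' Hs Hn Hn' Heq H).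
Qed.

Lemma noless M M' tau Rc tau' Rc' :
  is_model M tau Rc -> is_model M' tau' Rc' ->
  generic M tau Rc -> generic M' tau' Rc' ->
  sigma M tau Rc = sigma M' tau' Rc' -> ~ (M < M')%N.
Proof.
move=> Hm Hm' Hg Hg' Hs HM.
have Heq : forall j, (j < M.+1)%N -> tau`_j = tau'`_j.
  apply: tau_from_T=> j Hj; apply: (all_T Hm Hm' Hg Hg' Hs)=> //.
  exact: leq_trans (ltnW HM).
have Hin : Tn tau' M.+1 \in sigma M tau Rc by rewrite Hs; exact: Tn_sigma.
have := all_A Hin => /(inA_eq Heq).
exact: (Tn_notA Hm' Hg' HM).
Qed.

End Aux.

Theorem corollary4p5 (F : archiRealFieldType) (M M' : nat)
  (tau Rc tau' Rc' : seq F) :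
  is_model M tau Rc -> is_model M' tau' Rc' ->
  generic M tau Rc -> generic M' tau' Rc' ->
  data M tau Rc = data M' tau' Rc' ->
  [/\ M = M', tau = tau' & Rc = Rc'].
Proof.
move=> Hm Hm' Hg Hg' [Hs Ha].
have EM : M = M'.
  case: (ltngtP M M') => // H.
    by case: (noless Hm Hm' Hg Hg' Hs H).
  by case: (noless Hm' Hm Hg' Hg (esym Hs) H).
subst M'.
have Et : tau = tau'.
  have := Hm; case=> _ s1 _ _ _; have := Hm'; case=> _ s2 _ _ _.
  apply: (@eq_from_nth _ 0); first by rewrite s1 s2.
  move=> j; rewrite s1 => Hj; apply: (@tau_from_T F tau tau' M.+1) => // i Hi.
  exact: (all_T Hm Hm' Hg Hg' Hs).
subst tau'.
split=> //.
have Hc : forall s, s \in sigma M tau Rc -> Defs.coefD M tau Rc s = Defs.coefD M tau Rc' s.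
  move: Ha; rewrite /alpha Hs => /eq_in_map H s; exact: H.
have HR : forall n, (n <= M)%N -> Rc`_n = Rc'`_n.
  elim/ltn_ind=> n IH Hn.
  have := Hc _ (Tn_sigma Hm Hg Hn).
  rewrite -(@dotk_ee F M) // !(coefD_k Hm Hg) ?(coefD_k Hm' Hg') ?(inLtau_ee _ Hm) //.
  rewrite !amp_ee //.
  have -> : \prod_(j < M.+1 | (j < n)%N) (1 - Rc'`_j ^+ 2) =
            \prod_(j < M.+1 | (j < n)%N) (1 - Rc`_j ^+ 2).
    apply: eq_bigr=> j Hj; rewrite IH //.
    exact: leq_trans (ltnW Hj) Hn.
  apply: mulIf; apply: lt0r_neq0; apply: prodr_gt0=> j _.
  have := Hm; case=> _ _ _ _ /(_ j) /andP[H1 H2].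
  rewrite -(mul1r 1) -expr2 subr_sqr mulr_gt0 // ?subr_gt0 //.
  by rewrite addrC -ltrBlDr sub0r.
have := Hm; case=> _ _ s1 _ _; have := Hm'; case=> _ _ s2 _ _.
apply: (@eq_from_nth _ 0); first by rewrite s1 s2.
by move=> j; rewrite s1 ltnS => /HR.
Qed.
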